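(* Let $n\ge1$, let $\mathbf{a},\mathbf{b}\in\{0,1\}^{n-1}$ and let $x,y\in\mathbb{Q}[t]$. Then in the total complex $\mathrm{Tot}(\mathcal{L}^{\mathbb{Q}}_{T^n}(\mathbb{Q}[t];\mathbb{Q}))$, in multi-degree $\mathbf{1}_n$, \[x_{(\mathbf{a},1)}\cdot y_{(\mathbf{b},1)}\sim x_{(\mathbf{a},0)}\cdot y_{(\mathbf{b},1)}+x_{(\mathbf{a},1)}\cdot y_{(\mathbf{b},0)}.\]
   Context: The $n$-chain complex $C=\mathcal{L}^{\mathbb{Q}}_{T^n}(\mathbb{Q}[t];\mathbb{Q})$: in multi-degree $\mathbf{V}=(v_1,\dots,v_n)\in\mathbb{N}^n$, $C_{\mathbf{V}}=\mathbb{Q}\otimes\bigotimes_{\mathbf{0}\neq\mathbf{v}\le\mathbf{V}}\mathbb{Q}[t]$ (tensors over $\mathbb{Q}$), i.e. elements are sums of ''multi-matrices'' of size $(v_1+1)\times\cdots\times(v_n+1)$ with entries in $\mathbb{Q}[t]$ at coordinates $\mathbf{v}\ne\mathbf{0}_n$ ($\mathbf{0}\le\mathbf{v}\le\mathbf{V}$ entrywise) and an entry in $\mathbb{Q}$ at $\mathbf{0}_n$, where $\mathbb{Q}$ is a $\mathbb{Q}[t]$-module via $t\mapsto0$. In direction $i$, the slices of a multi-matrix are indexed by the $i$th coordinate $j\in\{0,\dots,v_i\}$; the face map $d_{i,j}$ for $0\le j<v_i$ multiplies slice $j$ and slice $j+1$ entrywise into one slice, and $d_{i,v_i}$ multiplies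 slice $v_i$ entrywise into slice $0$ (the Hochschild face maps in each direction). Put $\mathrm{d}_i=\sum_{j=0}^{v_i}(-1)^jd_{i,j}$; the total complex $\mathrm{Tot}(C)$ has differential $\mathrm{d}=\sum_{i=1}^n(-1)^{v_1+\cdots+v_{i-1}}\mathrm{d}_i$ in component $\mathbf{V}$. We write $\mathbf{0}_m,\mathbf{1}_m$ for the constant vectors of length $m$. For $x\in\mathbb{Q}[t]$ and a coordinate $\mathbf{v}$, $x_{\mathbf{v}}$ is the multi-matrix with $x$ at $\mathbf{v}$ (its image in $\mathbb{Q}$ if $\mathbf{v}=\mathbf{0}$) and $1$ elsewhere; $x_{\mathbf{v}}\cdot y_{\mathbf{w}}$ is their product (entrywise), i.e. $x$ at $\mathbf{v}$, $y$ at $\mathbf{w}$ if $\mathbf{v}\neq\mathbf{w}$, and $xy$ at $\mathbf{v}$ if $\mathbf{v}=\mathbf{w}$. The relation $\sim$ means the two elements differ by a boundary in $\mathrm{Tot}(C)$. *)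

(* Defs.v *)
From HB Require Import structures.
From mathcomp Require Import all_boot all_order all_algebra.
From mathcomp Require Import mpoly.
Set Implicit Arguments. Unset Strict Implicit. Unset Printing Implicit Defensive.
Import GRing.Theory.
Local Open Scope ring_scope.

(* Model of C = L^Q_{T^n}(Q[t];Q) in the Hochschild multi-degrees V with
   V_i <= n+1 (this covers all multi-degrees of total degree <= n+1, which is
   all that is needed for boundaries hitting total degree n).
   A coordinate is an element of the box  Box n = {ffun 'I_n -> 'I_n.+2}.
   Q[t]^{(x) N} (tensor over Q) is the polynomial ring Q[t_v]; we use one
   variable t_v per box coordinate v.  The component C_V is modelled as the
   quotient of {mpoly rat[#|Box n|]} in which the variables t_v with v not <= V
   or v = 0 are set to 0 (t_0 = 0 accounts for the factor Q = Q[t]/(t));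
   [proj V] is the canonical projection onto the normal form. *)

Definition Box (n : nat) := {ffun 'I_n -> 'I_n.+2}.

Definition Poly (n : nat) := {mpoly rat[#|{: Box n}|]}.

Definition tvar (n : nat) (v : Box n) : Poly n := 'X_(enum_rank v).

Definition subst (n : nat) (h : Box n -> Poly n) (p : Poly n) : Poly n :=
  mmap (@mpolyC _ rat) (fun k => h (enum_val k)) p.

Definition le_coord (n : nat) (v V : Box n) : bool :=
  [forall i, (v i <= V i)%N].

Definition is_zero_coord (n : nat) (v : Box n) : bool :=
  [forall i, (v i == 0 :> nat)].

Definition proj (n : nat) (V : Box n) (p : Poly n) : Poly n :=
  subst (fun v => if le_coord v V && ~~ is_zero_coord v then tvar v else 0) p.

(* the map on coordinates induced by the face d_{i,j} (source multi-degree V) *)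
Definition face_coord (n : nat) (V : Box n) (i : 'I_n) (j : nat) (v : Box n)
  : Box n :=
  [ffun k => if k == i then
               (if (j < V i)%N then
                  (if (v i <= j)%N then v k else inord (v i).-1)
                else (if (v i == V i :> nat) then inord 0 else v k))
             else v k].

Definition dec (n : nat) (V : Box n) (i : 'I_n) : Box n :=
  [ffun k => if k == i then inord (V k).-1 else V k].
Definition inc (n : nat) (W : Box n) (i : 'I_n) : Box n :=
  [ffun k => if k == i then inord (W k).+1 else W k].

Definition face (n : nat) (V : Box n) (i : 'I_n) (j : nat) (p : Poly n)
  : Poly n :=
  proj (dec V i) (subst (fun v => tvar (face_coord V i j v)) (proj V p)).

Definition dir_diff (n : nat) (V : Box n) (i : 'I_n) (p : Poly n) : Poly n :=
  \sum_(j < (V i).+1) (-1) ^+ j * face V i j p.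

Definition total_deg (n : nat) (V : Box n) : nat := \sum_(i < n) (V i : nat).

(* component in multi-degree W of the total differential d applied to the
   chain c = (c_V)_{|V| = |W|+1} of Tot(C):
   d = sum_i (-1)^(V_1 + ... + V_{i-1}) d_i *)
Definition tot_diff_at (n : nat) (c : Box n -> Poly n) (W : Box n) : Poly n :=
  \sum_(i < n)
    (-1) ^+ (\sum_(k < n | (k < i)%N) (W k : nat)) *
    dir_diff (inc W i) i (c (inc W i)).

(* p ~ q in Tot(C), where p, q lie in the component C_{W0} of total degree m:
   p - q is the boundary of a chain of total degree m+1. *)
Definition homologous (n : nat) (W0 : Box n) (p q : Poly n) : Prop :=
  exists c : Box n -> Poly n,
    forall W : Box n, total_deg W = total_deg W0 ->
      proj W (tot_diff_at c W) = proj W (if W == W0 then p - q else 0).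

(* x_v : the multi-matrix with x at coordinate v and 1 elsewhere *)
Definition at_coord (n : nat) (x : {poly rat}) (v : Box n) : Poly n :=
  (map_poly (@mpolyC _ rat) x).[tvar v].

Definition ones (n : nat) : Box n := [ffun _ => inord 1].

Definition coord_ae (n : nat) (a : (n.-1).-tuple bool) (e : bool) : Box n :=
  [ffun i : 'I_n => inord (if (i < n.-1)%N then nat_of_bool (nth false a i)
                           else nat_of_bool e)].

(* Main.v *)
Require Import Defs.
Set Implicit Arguments. Unset Strict Implicit.
From HB Require Import structures.
From mathcomp Require Import all_boot all_order all_algebra.
From mathcomp Require Import mpoly.
From mathcomp Require Import ring.
Require Import Defs.
Set Implicit Arguments. Unset Strict Implicit.
Import GRing.Theory.
Local Open Scope ring_scope.

Section Aux.
Variable n : nat.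
Implicit Types (h : Box n -> Poly n) (p q : Poly n).

Definition ev (x : {poly rat}) (q : Poly n) : Poly n :=
  (map_poly (@mpolyC _ rat) x).[q].

Lemma substM h p q : subst h (p * q) = subst h p * subst h q.
Proof. exact: rmorphM. Qed.
Lemma substN h p : subst h (- p) = - subst h p.
Proof. exact: rmorphN. Qed.
Lemma subst0 h : subst h 0 = 0.
Proof. exact: rmorph0. Qed.
Lemma subst_sign h m : subst h ((-1) ^+ m) = (-1) ^+ m.
Proof. exact: rmorph_sign. Qed.
Lemma subst_tvar h v : subst h (tvar v) = h v.
Proof. by rewrite /subst /tvar mmapX mmap1U enum_rankK. Qed.
Lemma subst_ev h x q : subst h (ev x q) = ev x (subst h q).
Proof.
rewrite /ev /subst -horner_map -map_poly_comp; congr (_.[_]).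
by apply: eq_map_poly => c /=; rewrite mmapC.
Qed.
End Aux.
Section Aux2.
Variable n : nat.
Implicit Types (p q : Poly n) (V W u v w : Box n) (i : 'I_n).

Lemma projM V p q : proj V (p * q) = proj V p * proj V q. Proof. exact: substM. Qed.
Lemma projN V p : proj V (- p) = - proj V p. Proof. exact: substN. Qed.
Lemma proj0 V : proj V 0 = 0 :> Poly n. Proof. exact: subst0. Qed.
Lemma projB V p q : proj V (p - q) = proj V p - proj V q. Proof. exact: rmorphB. Qed.
Lemma projD V p q : proj V (p + q) = proj V p + proj V q. Proof. exact: rmorphD. Qed.
Lemma proj_sign V m : proj V ((-1) ^+ m) = (-1) ^+ m :> Poly n. Proof. exact: subst_sign. Qed.
Lemma proj_ev V x q : proj V (ev x q) = ev x (proj V q). Proof. exact: subst_ev. Qed.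
Lemma proj_tvar V v : proj V (tvar v) =
  if le_coord v V && ~~ is_zero_coord v then tvar v else 0.
Proof. by rewrite /proj subst_tvar. Qed.
Lemma proj_proj_tvar V v : proj V (proj V (tvar v)) = proj V (tvar v).
Proof. by rewrite proj_tvar; case: ifP => h; rewrite ?proj0 // proj_tvar h. Qed.

Lemma faceM V i j p q : face V i j (p * q) = face V i j p * face V i j q.
Proof. by rewrite /face projM substM projM. Qed.
Lemma faceN V i j p : face V i j (- p) = - face V i j p.
Proof. by rewrite /face projN substN projN. Qed.
Lemma face0 V i j : face V i j 0 = 0 :> Poly n.
Proof. by rewrite /face proj0 subst0 proj0. Qed.
Lemma face_sign V i j m : face V i j ((-1) ^+ m) = (-1) ^+ m :> Poly n.
Proof. by rewrite /face proj_sign subst_sign proj_sign. Qed.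
Lemma face_ev V i j x q : face V i j (ev x q) = ev x (face V i j q).
Proof. by rewrite /face proj_ev subst_ev proj_ev. Qed.
Lemma face_tvar V i j v : face V i j (tvar v) =
  if le_coord v V && ~~ is_zero_coord v
  then proj (dec V i) (tvar (face_coord V i j v)) else 0.
Proof. by rewrite /face proj_tvar; case: ifP => _; rewrite ?subst_tvar ?subst0 ?proj0. Qed.

Lemma dir_diff0 V i : dir_diff V i 0 = 0 :> Poly n.
Proof. by rewrite /dir_diff big1 // => j _; rewrite face0 mulr0. Qed.

Lemma face_coord01 V i u : (V i : nat) = 1%N -> (u i <= V i)%N ->
  face_coord V i 0 u = face_coord V i 1 u.
Proof.
move=> hV hu; apply/ffunP => k; rewrite !ffunE; case: eqP => // ->.
rewrite hV /=; rewrite hV in hu.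
by case: (u i) hu => [[|[|m]] hm] //= _.
Qed.

Lemma face01 V i u : (V i : nat) = 1%N ->
  face V i 0 (tvar u) = face V i 1 (tvar u).
Proof.
move=> hV; rewrite !face_tvar; case: ifP => // /andP [/forallP hu _].
by rewrite face_coord01.
Qed.

Lemma dir_diff_1 V i x y u w m : (V i : nat) = 1%N ->
  dir_diff V i ((-1) ^+ m * (ev x (tvar u) * ev y (tvar w))) = 0.
Proof.
move=> hV; rewrite /dir_diff hV !big_ord_recr big_ord0 /=.
rewrite !faceM !face_sign !face_ev !face01 //.
by rewrite add0r expr0 expr1 !mul1r mulN1r addrN.
Qed.
End Aux2.

Lemma pred_lt n : (0 < n)%N -> (n.-1 < n)%N.
Proof. by move=> h; rewrite prednK. Qed.

Section Main.
Variable n : nat.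
Hypothesis hn : (0 < n)%N.
Let last : 'I_n := Ordinal (pred_lt hn).

Lemma lt_last (i : 'I_n) : i != last -> (i < n.-1)%N.
Proof.
move: (ltn_ord i); rewrite -val_eqE /= => hlt hne.
by rewrite ltn_neqAle hne /= -ltnS prednK.
Qed.

Definition V0 : Box n := [ffun k : 'I_n => inord (if (k < n.-1)%N then 1%N else 2%N)].

Lemma V0_last : (V0 last : nat) = 2%N.
Proof. by rewrite ffunE /= ltnn inordK // ltnS; case: n hn. Qed.
Lemma V0_other i : i != last -> (V0 i : nat) = 1%N.
Proof. by move=> /lt_last h; rewrite ffunE h inordK. Qed.

Lemma inc_last W : inc W last = V0 -> W = ones n.
Proof.
move=> E; apply/ffunP => k; rewrite ffunE; apply/val_inj => /=.
have := congr1 (fun f : Box n => (f k : nat)) E.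
have -> : ((inord 1 : 'I_n.+2) : nat) = 1%N by rewrite inordK.
rewrite /= ffunE; case: (eqVneq k last) => [->|hk]; last first.
  by rewrite V0_other // inordK.
rewrite V0_last.
case: (ltnP (W last).+1 n.+2) => h.
  by rewrite inordK // => -[->].
by rewrite /inord /insubd insubF //= ltnNge h.
Qed.

Lemma inc_ones : inc (ones n) last = V0.
Proof.
apply/ffunP => k; rewrite !ffunE; case: (eqVneq k last) => [->|hk].
  by rewrite ltnn (inordK (_ : 1 < n.+2)%N).
by rewrite (lt_last hk).
Qed.

Lemma dec_V0 : dec V0 last = ones n.
Proof.
apply/ffunP => k; rewrite !ffunE; case: (eqVneq k last) => [->|hk].
  by rewrite ltnn inordK // ltnS; case: n hn.
by rewrite (lt_last hk).
Qed.
Let h2 : (2 < n.+2)%N. Proof. by rewrite ltnS; case: n hn. Qed.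

Definition w2 (b : (n.-1).-tuple bool) : Box n :=
  [ffun k : 'I_n => inord (if (k < n.-1)%N then nat_of_bool (nth false b k) else 2%N)].

Lemma valid_v a : le_coord (coord_ae a true) V0 && ~~ is_zero_coord (coord_ae a true).
Proof.
apply/andP; split.
  apply/forallP => k; rewrite !ffunE; case: ifP => hk; rewrite !inordK //.
  by case: (nth _ _ _).
  by case: (nth _ _ _).
by apply/negP => /forallP /(_ last); rewrite ffunE ltnn inordK.
Qed.

Lemma valid_w b : le_coord (w2 b) V0 && ~~ is_zero_coord (w2 b).
Proof.
apply/andP; split.
  apply/forallP => k; rewrite !ffunE; case: ifP => hk; rewrite !inordK //.
  by case: (nth _ _ _).
  by case: (nth _ _ _).
by apply/negP => /forallP /(_ last); rewrite ffunE ltnn inordK.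
Qed.

Lemma fc0v a : face_coord V0 last 0 (coord_ae a true) = coord_ae a false.
Proof.
apply/ffunP => k; rewrite !ffunE; case: (eqVneq k last) => [->|hk].
  by rewrite ?V0_last ?ffunE ltnn ?inordK.
by rewrite (lt_last hk).
Qed.
Lemma fc0w b : face_coord V0 last 0 (w2 b) = coord_ae b true.
Proof.
apply/ffunP => k; rewrite !ffunE; case: (eqVneq k last) => [->|hk].
  by rewrite ?V0_last ?ffunE ltnn ?inordK.
by rewrite (lt_last hk).
Qed.
Lemma fc1v a : face_coord V0 last 1 (coord_ae a true) = coord_ae a true.
Proof.
apply/ffunP => k; rewrite !ffunE; case: (eqVneq k last) => [->|hk].
  by rewrite ?V0_last ?ffunE ltnn ?inordK.
by rewrite (lt_last hk).
Qed.
Lemma fc1w b : face_coord V0 last 1 (w2 b) = coord_ae b true.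
Proof.
apply/ffunP => k; rewrite !ffunE; case: (eqVneq k last) => [->|hk].
  by rewrite ?V0_last ?ffunE ltnn ?inordK.
by rewrite (lt_last hk).
Qed.
Lemma fc2v a : face_coord V0 last 2 (coord_ae a true) = coord_ae a true.
Proof.
apply/ffunP => k; rewrite !ffunE; case: (eqVneq k last) => [->|hk].
  by rewrite ?V0_last ?ffunE ltnn ?inordK.
by rewrite (lt_last hk).
Qed.
Lemma fc2w b : face_coord V0 last 2 (w2 b) = coord_ae b false.
Proof.
apply/ffunP => k; rewrite !ffunE; case: (eqVneq k last) => [->|hk].
  by rewrite ?V0_last ?ffunE ltnn ?inordK.
by rewrite (lt_last hk).
Qed.
End Main.

Lemma alg_final n (V : Box n) (x y : {poly rat}) (pa0 pa1 pb0 pb1 : Poly n) (k : nat) :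
  proj V pa0 = pa0 -> proj V pa1 = pa1 -> proj V pb0 = pb0 -> proj V pb1 = pb1 ->
  proj V ((-1) ^+ k * (0 +
     (-1) ^+ 0 * ((-1) ^+ k.+1 * (ev x pa0 * ev y pb1)) +
     (-1) ^+ 1 * ((-1) ^+ k.+1 * (ev x pa1 * ev y pb1)) +
     (-1) ^+ 2 * ((-1) ^+ k.+1 * (ev x pa1 * ev y pb0))))
  = ev x pa1 * ev y pb1 - (ev x pa0 * ev y pb1 + ev x pa1 * ev y pb0).
Proof.
move=> h1 h2 h3 h4.
rewrite projM proj_sign !projD proj0 !projM !proj_sign !proj_ev h1 h2 h3 h4.
have ss : (-1) ^+ k * (-1) ^+ k.+1 = -1 :> Poly n.
  by rewrite exprS mulrCA -exprD addnn -mul2n exprM sqrrN !expr1n mulr1.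
move: ((-1) ^+ k) ((-1) ^+ k.+1) ss => s t ss.
rewrite expr0 !expr1 mulrNN mulr1 !mul1r add0r.
have -> : forall X Y Z : Poly n, s * (t * X + -1 * (t * Y) + t * Z) = (s * t) * (X - Y + Z).
  by move=> X Y Z; ring.
by rewrite ss; ring.
Qed.

Theorem lemma4p6 (n : nat) (hn : (0 < n)%N) (a b : (n.-1).-tuple bool)
    (x y : {poly rat}) :
  homologous (ones n)
    (at_coord x (coord_ae a true) * at_coord y (coord_ae b true))
    (at_coord x (coord_ae a false) * at_coord y (coord_ae b true)
     + at_coord x (coord_ae a true) * at_coord y (coord_ae b false)).
Proof.
pose last : 'I_n := Ordinal (pred_lt hn).
pose m := (\sum_(k < n | (k < last)%N) (ones n k : nat))%N.
pose z : Poly n := ev x (tvar (coord_ae a true)) * ev y (tvar (w2 b)).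
pose c (V : Box n) : Poly n := if V == V0 n then (-1) ^+ m.+1 * z else 0.
exists c => W _.
rewrite /tot_diff_at (bigD1 last) //= [X in _ + X]big1 ?addr0; last first.
  move=> i hi; rewrite /c /=; case: (eqVneq (inc W i) (V0 n)) => [-> | _]; last by rewrite dir_diff0 mulr0.
  by rewrite dir_diff_1 ?mulr0 // V0_other.
rewrite /c /=; case: (eqVneq (inc W last) (V0 n)) => [hinc|hne]; last first.
  rewrite dir_diff0 mulr0 proj0; case: eqP => [hW|]; last by rewrite proj0.
  by move: hne; rewrite hW inc_ones eqxx.
have hW := inc_last hinc; subst W; rewrite hinc !eqxx.
rewrite /dir_diff V0_last !big_ord_recr big_ord0 /=.
rewrite /z !faceM !face_sign !face_ev !face_tvar !(valid_v hn) !(valid_w hn) (dec_V0 hn).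
rewrite (fc0v hn) (fc0w hn) (fc1v hn) (fc1w hn) (fc2v hn) (fc2w hn).
have E u w : proj (ones n) (at_coord x u * at_coord y w)
   = ev x (proj (ones n) (tvar u)) * ev y (proj (ones n) (tvar w)).
  by rewrite projM; congr (_ * _); apply: proj_ev.
rewrite [RHS]projB projD ![in RHS]E.
have := @alg_final n (ones n) x y (proj (ones n) (tvar (coord_ae a false)))
  (proj (ones n) (tvar (coord_ae a true))) (proj (ones n) (tvar (coord_ae b false)))
  (proj (ones n) (tvar (coord_ae b true))) m.
rewrite !proj_proj_tvar => /(_ erefl erefl erefl erefl).
by [].
Qed.
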